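(* Let $\underline{E}=(E_p)_{p\in\mathbb{P}}$ be a family with $E_p\subseteq\overline{\mathbb{Z}_p}$ for every prime $p$, and let $R=\textnormal{Int}_{\mathbb{Q}}(\underline{E},\overline{\widehat{\mathbb{Z}}})$. Let $P$ be a finite set of primes and let $S$ be the multiplicative subset of $\mathbb{Z}$ generated by $\mathbb{P}\setminus P$. Then $$S^{-1}R=\bigcap_{p\in P}\textnormal{Int}_{\mathbb{Q}}(E_p,\overline{\mathbb{Z}_p}).$$ In particular, for each prime $p$, $(\mathbb{Z}\setminus p\mathbb{Z})^{-1}R=\textnormal{Int}_{\mathbb{Q}}(E_p,\overline{\mathbb{Z}_p})$.
   Context: $\mathbb{P}$ is the set of prime numbers. For a prime $p$, $\mathbb{Z}_p$ is the ring of $p$-adic integers, $\overline{\mathbb{Q}_p}$ a fixed algebraic closure of $\mathbb{Q}_p$, $\overline{\mathbb{Z}_p}$ the integral closure of $\mathbb{Z}_p$ in $\overline{\mathbb{Q}_p}$, and $v_p$ the unique extension of the $p$-adic valuation to $\overline{\mathbb{Q}_p}$. For $E_p\subseteq\overline{\mathbb{Z}_p}$, $\textnormal{Int}_{\mathbb{Q}}(E_p,\overline{\mathbb{Z}_p})=\{f\in\mathbb{Q}[X]\mid f(\alpha)\in\overline{\mathbb{Z}_p}\ \forall\alpha\in E_p\}$ (this is $\mathbb{Q}[X]$ if $E_p=\emptyset$). For a family $\underline{E}=(E_p)_p$ (written $\prod_pE_p\subseteq\overline{\widehat{\mathbb{Z}}}=\prod_p\overline{\mathbb{Z}_p}$;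 components may be empty), $\textnormal{Int}_{\mathbb{Q}}(\underline{E},\overline{\widehat{\mathbb{Z}}})=\bigcap_{p\in\mathbb{P}}\textnormal{Int}_{\mathbb{Q}}(E_p,\overline{\mathbb{Z}_p})$, i.e. the polynomials $f\in\mathbb{Q}[X]$ with $f(\alpha_p)\in\overline{\mathbb{Z}_p}$ for all $p$ and all $\alpha_p\in E_p$. *)

(* Defs.v *)
From HB Require Import structures.
From mathcomp Require Import all_boot all_order all_algebra.
Set Implicit Arguments. Unset Strict Implicit. Unset Printing Implicit Defensive.
Import Order.TTheory GRing.Theory Num.Theory.
Local Open Scope ring_scope.

Definition padic_val (p : nat) (q : rat) : int :=
  (logn p (absz (numq q)))%:Z - (logn p (absz (denq q)))%:Z.

(* Abstract model of (Qbar_p, v_p): an algebraically closed field K of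
   characteristic 0 with a rational-valued valuation v (given on K^x; the
   value at 0 (= +oo) is irrelevant) extending the p-adic valuation of Q,
   where Q is embedded into K by ratr. *)
Definition is_padic_closure (p : nat) (K : closedFieldType) (v : K -> rat) :=
  [/\ [pchar K] =i pred0,
      forall x y : K, x != 0 -> y != 0 -> v (x * y) = v x + v y,
      forall x y : K, x != 0 -> y != 0 -> x + y != 0 ->
         Num.min (v x) (v y) <= v (x + y)
    & forall q : rat, q != 0 -> v (ratr q) = (padic_val p q)%:~R ].

Definition Zbar (K : closedFieldType) (v : K -> rat) (x : K) : Prop :=
  x = 0 \/ 0 <= v x.

Definition IntQ (K : closedFieldType) (v : K -> rat) (E : K -> Prop)
  (f : {poly rat}) : Prop :=
  forall a : K, E a -> Zbar v (map_poly ratr f).[a].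

(* Int_Q(E, Zhatbar) = intersection over all primes p of Int_Q(E_p, Zbar_p) *)
Definition IntQhat (K : nat -> closedFieldType) (v : forall p, K p -> rat)
  (E : forall p, K p -> Prop) (f : {poly rat}) : Prop :=
  forall p : nat, prime p -> IntQ (v p) (E p) f.

Definition genS (P : seq nat) (s : int) : Prop :=
  exists l : seq nat, all (fun q => prime q && (q \notin P)) l /\
    s = (\prod_(q <- l) q)%:Z.

Definition localize (S : int -> Prop) (A : {poly rat} -> Prop)
  (f : {poly rat}) : Prop :=
  exists s : int, exists g : {poly rat},
    [/\ S s, A g & f = (s%:~R)^-1 *: g].

(* Main.v *)
Require Import Defs.
From HB Require Import structures.
From mathcomp Require Import all_boot all_order all_algebra.
Import Order.TTheory GRing.Theory Num.Theory.
Local Open Scope ring_scope.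

Lemma padic_val_int p (n : int) : padic_val p n%:~R = (logn p `|n|)%:Z.
Proof. by rewrite /padic_val numq_int denq_int /= logn1 subr0. Qed.

Section R.
Variable F : fieldType.
Hypothesis ch : [pchar F] =i pred0.
Lemma intr_neq0 (n : int) : n != 0 -> n%:~R != 0 :> F.
Proof.
have H := (pcharf0P F).1 ch.
have E m : (Posz m)%:~R = m%:R :> F by [].
case: n => m; rewrite ?NegzE.
  by move=> hm; have := H m; rewrite -E => ->.
by move=> _; rewrite intrN oppr_eq0; have := H m.+1; rewrite -E => ->.
Qed.
Lemma ratrM (x y : rat) : ratr (x * y) = ratr x * ratr y :> F.
Proof.
have injZtoQ: @injective rat int intr by apply: intr_inj.
have nz_den x0: (denq x0)%:~R != 0 :> F by rewrite intr_neq0 // denq_eq0.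
rewrite /ratr mulrC mulrAC; apply: canLR (mulKf (nz_den _)) _; rewrite !mulrA.
do 2!apply: canRL (mulfK (nz_den _)) _; rewrite -!rmorphM; congr _%:~R.
apply: injZtoQ; rewrite !rmorphM [x * y]lock /= !numqE -lock.
by rewrite -!mulrA mulrA mulrCA -!mulrA (mulrCA y).
Qed.
Lemma ratr_neq0 (x : rat) : x != 0 -> ratr x != 0 :> F.
Proof.
move=> x0; rewrite /ratr mulf_neq0 // ?invr_eq0 intr_neq0 // ?numq_eq0 ?denq_eq0 //.
Qed.
Lemma ratr0 : ratr 0 = 0 :> F. Proof. exact: (ratr_int F 0). Qed.
Lemma ratr1 : ratr 1 = 1 :> F. Proof. exact: (ratr_int F 1). Qed.
Lemma mpZ (c : rat) (g : {poly rat}) :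
  map_poly (@ratr F) (c *: g) = ratr c *: map_poly (@ratr F) g.
Proof. apply/polyP=> i. by rewrite coefZ !coef_map_id0 ?ratr0 // coefZ ratrM. Qed.
End R.

Section Val.
Variables (p : nat) (K : closedFieldType) (v : K -> rat).
Hypothesis Hv : is_padic_closure p v.

Lemma ch : [pchar K] =i pred0. Proof. by case: Hv. Qed.

Lemma vM x y : x != 0 -> y != 0 -> v (x * y) = v x + v y.
Proof. by case: Hv => _ H1 _ H2; first [apply: H1 | apply: H2]. Qed.

Lemma vratr q : q != 0 -> v (ratr q) = (padic_val p q)%:~R.
Proof. by case: Hv => _ H1 _ H2; first [apply: H1 | apply: H2]. Qed.

Lemma Zbar0 : Zbar v 0. Proof. by left. Qed.

Lemma Zbar_int (n : int) : Zbar v (n%:~R).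
Proof.
have [->|n0] := eqVneq n 0; first by left.
right; rewrite -(ratr_int K) vratr ?intr_eq0 // padic_val_int ler0z //.
Qed.

Lemma Zbar1 : Zbar v 1. Proof. by have := Zbar_int 1. Qed.

Lemma ZbarM x y : Zbar v x -> Zbar v y -> Zbar v (x * y).
Proof.
case=> [->|hx]; first by rewrite mul0r; left.
case=> [->|hy]; first by rewrite mulr0; left.
have [->|x0] := eqVneq x 0; first by rewrite mul0r; left.
have [->|y0] := eqVneq y 0; first by rewrite mulr0; left.
by right; rewrite vM // addr_ge0.
Qed.

Lemma ZbarD x y : Zbar v x -> Zbar v y -> Zbar v (x + y).
Proof.
case=> [->|hx]; first by rewrite add0r.
case=> [->|hy]; first by rewrite addr0; right.
have [->|x0] := eqVneq x 0; first by rewrite add0r; right.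
have [->|y0] := eqVneq y 0; first by rewrite addr0; right.
have [->|s0] := eqVneq (x + y) 0; first by left.
right; case: Hv => _ _ H _; apply: le_trans (H _ _ x0 y0 s0).
by rewrite le_min hx hy.
Qed.

Lemma ZbarX x n : Zbar v x -> Zbar v (x ^+ n).
Proof. move=> hx; elim: n => [|n IH]; first by rewrite expr0; exact: Zbar1. by rewrite exprS; apply: ZbarM. Qed.

Lemma Zbar_horner (q : {poly K}) a :
  (forall i, Zbar v q`_i) -> Zbar v a -> Zbar v q.[a].
Proof.
move=> hq ha; rewrite horner_coef.
apply: (big_ind (Zbar v)); [exact: Zbar0 | exact: ZbarD |].
by move=> i _; apply: ZbarM => //; apply: ZbarX.
Qed.

Lemma IntQ_scale_int E (s : int) f : IntQ v E f -> IntQ v E (s%:~R *: f).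
Proof.
move=> hf a ha; rewrite (@mpZ K ch) hornerZ ratr_int.
exact: ZbarM (Zbar_int s) (hf a ha).
Qed.

Hypothesis hp : prime p.

Lemma IntQ_scale_inv E (s : int) f : ~~ (p%:Z %| s)%Z ->
  IntQ v E f -> IntQ v E ((s%:~R)^-1 *: f).
Proof.
move=> nd hf a ha; rewrite (@mpZ K ch) hornerZ.
apply: ZbarM (hf a ha).
have s0 : s != 0 by apply: contraNneq nd => ->; rewrite dvdz0.
have sq0 : (s%:~R : rat) != 0 by rewrite intr_eq0.
right.
have h1 : v (ratr (s%:~R^-1 * s%:~R)) = 0.
  by rewrite mulVf // vratr ?oner_eq0 // (padic_val_int p 1) logn1.
rewrite (@ratrM K ch) vM ?(@ratr_neq0 K ch) ?invr_eq0 // (@vratr _ sq0) padic_val_int in h1.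
move: nd; rewrite dvdzE /= => nd.
rewrite logn_coprime ?prime_coprime // addr0 in h1.
by rewrite h1.
Qed.

Lemma Zbar_coef (s : int) (c : rat) :
  (c != 0 -> s != 0 /\ (logn p `|denq c| <= logn p `|s|)%N) ->
  Zbar v (ratr (s%:~R * c)).
Proof.
have [->|c0] := eqVneq c 0; first by rewrite mulr0 (@ratr0 K); left.
case=> // s0 hl.
have sq0 : (s%:~R : rat) != 0 by rewrite intr_eq0.
right; rewrite (@ratrM K ch) // vM ?(@ratr_neq0 K ch) // !vratr // padic_val_int.
rewrite -rmorphD ler0z /padic_val.
rewrite addrA -PoszD lerBrDr add0r lez_nat.
by apply: leq_trans hl (leq_addr _ _).
Qed.

End Val.

Local Open Scope nat_scope.
Lemma pnat_list (pi : nat_pred) m : (0 < m)%N -> pi.-nat m ->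
  exists l, all (fun q => prime q && (q \in pi)) l /\ m = (\prod_(q <- l) q)%N.
Proof.
elim/ltn_ind: m => m IH m0 hpi.
have [m1|m1] := leqP m 1.
  by exists [::]; rewrite big_nil; split => //; apply/eqP; rewrite eqn_leq m1.
have pp := pdiv_prime m1.
have dp := pdiv_dvd m.
have hq : (m %/ pdiv m < m)%N by rewrite ltn_Pdiv // prime_gt1.
have hpos : 0 < m %/ pdiv m by rewrite divn_gt0 ?pdiv_gt0 // dvdn_leq.
have [l [hl el]] := IH (m %/ pdiv m) hq hpos (pnat_div dp hpi).
exists (pdiv m :: l); rewrite big_cons /= pp hl -el mulnC divnK // andbT; split => //.
exact: (pnatP _ m0 hpi).
Qed.
Local Open Scope ring_scope.

Lemma genS_ndvd P p s : genS P s -> prime p -> p \in P -> ~~ (p%:Z %| s)%Z.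
Proof.
case=> l [hl ->] pp pP; rewrite dvdzE /=.
elim: l hl => [|q l IH] /=; first by rewrite big_nil dvdn1 -(prime_gt1 pp); case: p pp {pP} => [|[]].
case/andP=> /andP[qp qP] hl; rewrite big_cons Euclid_dvdM // negb_or IH // andbT.
by rewrite dvdn_prime2 //; apply: contraNN qP => /eqP <-.
Qed.

Lemma genS_neq0 P s : genS P s -> s != 0.
Proof.
case=> l [hl ->]; rewrite eqz_nat -lt0n.
elim: l hl => [|q l IH] /=; first by rewrite big_nil.
by case/andP=> /andP[qp _] hl; rewrite big_cons muln_gt0 prime_gt0 // IH.
Qed.

Lemma back (K : nat -> closedFieldType) (v : forall p : nat, K p -> rat)
  (Hv : forall p : nat, prime p -> is_padic_closure p (v p))
  (E : forall p : nat, K p -> Prop)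
  (HE : forall p : nat, prime p -> forall a : K p, E p a -> Zbar (v p) a)
  (P : seq nat) (f : {poly rat}) :
  (forall q, q \in P -> IntQ (v q) (E q) f) ->
  exists s : int, [/\ genS P s, s != 0 & IntQhat v E (s%:~R *: f)].
Proof.
move=> hf.
pose D := (\prod_(c <- f) `|denq c|)%N.
have D0 : (0 < D)%N by rewrite prodn_gt0 // => c; rewrite absz_gt0 denq_neq0.
pose pi : nat_pred := [pred q | q \notin P].
have [l [hl el]] := @pnat_list pi _ (part_gt0 pi D) (part_pnat pi D).
have gs : genS P (D`_pi)%N%:Z.
  exists l; split; last by rewrite el.
  by apply: sub_all hl => q /andP[-> /=].
exists (D`_pi)%N%:Z; split => //; first exact: genS_neq0 gs.
move=> q hq; have [qP|qP] := boolP (q \in P); first exact: (@IntQ_scale_int q (K q) (v q) (Hv q hq) (E q) _ f (hf q qP)).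
move=> a ha; apply: (@Zbar_horner q (K q) (v q) (Hv q hq) _ a); last exact: HE ha.
move=> i; rewrite coef_map_id0 ?ratr0 // coefZ.
apply: (@Zbar_coef q (K q) (v q) (Hv q hq)) => c0; split; first exact: genS_neq0 gs.
have iS : (i < size f)%N by rewrite ltnNge; apply: contra c0 => /(nth_default 0) ->.
have dD : (`|denq f`_i| %| D)%N by rewrite /D (big_rem _ (mem_nth 0 iS)) /= dvdn_mulr.
apply: leq_trans (dvdn_leq_log q D0 dD) _.
rewrite absz_nat -{1}(partnC pi D0) lognM ?part_gt0 //.
rewrite (logn_coprime (m := _`_pi^')) ?addn0 // prime_coprime //.
apply/negP => /(pnatP _ (part_gt0 _ _) (part_pnat pi^' D) q hq).
by rewrite !inE /= qP.
Qed.

Theorem mainTheorem1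
  (K : nat -> closedFieldType) (v : forall p : nat, K p -> rat)
  (Hv : forall p : nat, prime p -> is_padic_closure p (v p))
  (E : forall p : nat, K p -> Prop)
  (HE : forall p : nat, prime p -> forall a : K p, E p a -> Zbar (v p) a)
  (P : seq nat) (HP : all prime P) :
  (forall f : {poly rat},
     localize (genS P) (IntQhat v E) f <->
     (forall p : nat, p \in P -> IntQ (v p) (E p) f))
  /\
  (forall p : nat, prime p -> forall f : {poly rat},
     localize (fun s : int => ~~ (p%:Z %| s)%Z) (IntQhat v E) f <->
     IntQ (v p) (E p) f).
Proof.
split.
- move=> f; split.
  + case=> s [g [gs hg ->]] p pP; have pp := allP HP p pP.
    exact (@IntQ_scale_inv p (K p) (v p) (Hv p pp) pp (E p) s g (@genS_ndvd P p s gs pp pP) (hg p pp)).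
  + move=> hf; have [s [gs s0 hs]] := @back K v Hv E HE P f hf.
    exists s, (s%:~R *: f); split => //.
    by rewrite scalerA mulVf ?intr_eq0 // scale1r.
- move=> p pp f; split.
  + case=> s [g [nd hg ->]].
    exact (@IntQ_scale_inv p (K p) (v p) (Hv p pp) pp (E p) s g nd (hg p pp)).
  + move=> hf.
    have [|s [gs s0 hs]] := @back K v Hv E HE [:: p] f.
      by move=> q; rewrite inE => /eqP ->.
    exists s, (s%:~R *: f); split => //.
      exact: (@genS_ndvd [:: p] p s gs pp (mem_head _ _)).
    by rewrite scalerA mulVf ?intr_eq0 // scale1r.
Qed.
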